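(* With notation as in the context, the maps \[\mathbb{F}\colon\mathcal{T}\to\mathcal{E}nd_\Gamma(\mathrm{P}),\quad (x,y)\mapsto x_0,\qquad \mathbb{G}\colon\mathcal{E}nd_\Gamma(\mathrm{P})\to\mathcal{T},\quad g\mapsto\big(\overline{g},\,(-1)^{|g|}\Delta(g)\circ\tau\big)\] are well-defined morphisms of DG $\mathbb{Z}$-modules (complexes) which induce mutually inverse bijections on cohomology. Moreover, $\mathbb{G}$ is a morphism of DG-algebras (so $\mathbb{G}$ is a quasi-isomorphism of DG-algebras).
   Context: $k$ is a field, $\Gamma$ a $k$-algebra (right modules), $M$ a $\Gamma$-module, $n\ge1$. Given: a complex of finitely generated projectives $\mathrm{P}=(0\to P_{n-1}\xrightarrow{d_{n-1}}\cdots\xrightarrow{d_1}P_0\to0)$, $P_i$ in degree $-i$, and $\alpha\colon P_0\to M$, $\beta\colon M\to P_{n-1}$ with $0\to M\xrightarrow{\beta}P_{n-1}\to\cdots\to P_0\xrightarrow{\alpha}M\to0$ exact; $d_0=\beta\circ\alpha$. $\mathcal{P}$ is the complex with a copy of $P_i$ (the $\ell$-th copy) in degree $-(\ell n+i)$ for $\ell\ge0$, $0\le i\le n-1$, differential $(-1)^{\ell n}d_i$ from the $\ell$-th copy of $P_i$ to the $\ell$-th copy of $P_{i-1}$ ($i\geq1$) and $(-1)^{\ell n}d_0$ from the $(\ell+1)$-th copy of $P_0$ to the $\ell$-th copy of $P_{n-1}$. $\iota\colon\mathrm{P}\to\mathcal{P}$ is the inclusion of the $0$-th copy. $\mathcal{E}=\mathcal{E}nd_\Gamma(\mathcal{P})$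 and $\mathcal{E}nd_\Gamma(\mathrm{P})$ are DG endomorphism algebras (degree $i$: collections of maps raising degree by $i$; product: composition; differential $\delta(f)=d\circ f-(-1)^{|f|}f\circ d$). $\sigma\in\mathcal{E}^n$ is the identity from the $\ell$-th copy of $P_i$ to the $(\ell-1)$-th copy ($\ell\ge1$), zero on the $0$-th copy; $\tau\in\mathcal{E}^{-n}$ is the identity from the $\ell$-th copy of $P_i$ to the $(\ell+1)$-th copy, for all $\ell\geq 0$. ${}^{\sigma}\mathcal{E}^i=\{x\in\mathcal{E}^i:\sigma\circ x=(-1)^{n|x|}x\circ\sigma\}$, ${}^{-\sigma}\mathcal{E}^i=\{y\in\mathcal{E}^i:\sigma\circ y=(-1)^{n(|y|+1)}y\circ\sigma\}$. $\mathcal{T}$ is the DG-algebra with degree $j$ part $\{(x,y):x\in{}^{\sigma}\mathcal{E}^j,\ y\in{}^{-\sigma}\mathcal{E}^{j-n+1}\}$, product $(x,y)\cdot(a,b)=(x\circ a,\ x\circ b+(-1)^{|a|(n+1)}y\circ a)$ and differential $\xi(x,y)=(\delta(x)-(-1)^{|x|}y\circ\sigma,\ \delta(y))$. For $x\in\mathcal{E}$, $x\circ\iota$ is the restriction of $x$ to the $0$-th copy; when $x\in{}^{\sigma}\mathcal{E}$ this restriction has the form $\iota\circ x_0$ for a unique $x_0\in\mathcal{E}nd_\Gamma(\mathrm{P})$ (this is the meaning of $x_0$ above). For homogeneous $g\in\mathcal{E}nd_\Gamma(\mathrm{P})$, the graded repetition $\overline{g}\in\mathcal{E}$ is the element acting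 on the $\ell$-th copy of $\mathrm{P}$ as $(-1)^{\ell n|g|}g$ into the $\ell$-th copy, for every $\ell\ge0$; and $\Delta(g)=\delta(\overline{g})-\overline{\delta(g)}$. *)

(* Defs.v *)
From HB Require Import structures.
From mathcomp Require Import all_boot all_order all_algebra.
Set Implicit Arguments. Unset Strict Implicit. Unset Printing Implicit Defensive.
Import Order.TTheory GRing.Theory Num.Theory.
Local Open Scope ring_scope.

(* Right Gamma-modules are left modules over the converse ring Gamma^c. *)

Section Modules.
Variable R : pzRingType.

Definition fingen (V : lmodType R) : Prop :=
  exists (m : nat) (g : 'I_m -> V),
    forall v : V, exists c : 'I_m -> R, v = \sum_(t < m) c t *: g t.

Definition projective (V : lmodType R) : Prop :=
  forall (A B : lmodType R) (p : A -> B) (f : V -> B),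
    linear p -> linear f -> (forall b, exists a, p a = b) ->
    exists h : V -> A, linear h /\ forall v, p (h v) = f v.

Definition fg_projective (V : lmodType R) : Prop := fingen V /\ projective V.
End Modules.

Section Complexes.
Variable R : pzRingType.
Variable n : nat.
Variable P : nat -> lmodType R.   (* P i for i < n are the terms of the complex P *)

Definition castP (i i' : nat) (x : P i) : P i' :=
  match i =P i' with
  | ReflectT e => eq_rect i P x i' e
  | ReflectF _ => 0
  end.

Definition sgnZ (j : int) : R := (-1) ^+ `|j|%N.

(* ---------- graded endomorphisms of P (the complex 0 -> P_{n-1} -> ... -> P_0 -> 0),
   P_i in degree -i. *)
Definition FamP := forall i i' : nat, P i -> P i'.

Definition inP (j : int) (g : FamP) : Prop :=
  (forall i i', linear (g i i')) /\
  (forall i i' (v : P i),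
      ~~ [&& (i < n)%N, (i' < n)%N & (i'%:Z + j == i%:Z)] -> g i i' v = 0).

Definition eqP' (f g : FamP) : Prop := forall i i' v, f i i' v = g i i' v.
Definition addP (f g : FamP) : FamP := fun i i' v => f i i' v + g i i' v.
Definition scaleP (s : R) (f : FamP) : FamP := fun i i' v => s *: f i i' v.
Definition zeroP : FamP := fun i i' v => 0.
Definition idFamP : FamP :=
  fun i i' v => if (i == i') && (i < n)%N then castP i' v else 0.

Definition compP (jg : int) (f g : FamP) : FamP := fun i i2 x =>
  match i%:Z - jg with
  | Posz m => f m i2 (g i m x)
  | Negz _ => 0
  end.

(* The l-th copy of P_i (i < n) sits in degree -(l n + i); an element is a
   family f l i l' i' : (l-th copy of P_i) -> (l'-th copy of P_i'). *)
Definition idx (l i : nat) : nat := (l * n + i)%N.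

Definition FamE := forall l i l' i' : nat, P i -> P i'.

Definition inE (j : int) (f : FamE) : Prop :=
  (forall l i l' i', linear (f l i l' i')) /\
  (forall l i l' i' (v : P i),
      ~~ [&& (i < n)%N, (i' < n)%N & ((idx l' i')%:Z + j == (idx l i)%:Z)] ->
      f l i l' i' v = 0).

Definition eqE (f g : FamE) : Prop :=
  forall l i l' i' v, f l i l' i' v = g l i l' i' v.
Definition addE (f g : FamE) : FamE :=
  fun l i l' i' v => f l i l' i' v + g l i l' i' v.
Definition scaleE (s : R) (f : FamE) : FamE := fun l i l' i' v => s *: f l i l' i' v.
Definition zeroE : FamE := fun l i l' i' v => 0.
Definition idE : FamE :=
  fun l i l' i' v => if [&& l == l', i == i' & (i < n)%N] then castP i' v else 0.

(* composition f o g, where jg is the degree of g: the (unique) intermediate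
   component is the one in degree -(idx l i) + jg *)
Definition compE (jg : int) (f g : FamE) : FamE := fun l i l2 i2 x =>
  match (idx l i)%:Z - jg with
  | Posz m => f (m %/ n)%N (m %% n)%N l2 i2 (g l i (m %/ n)%N (m %% n)%N x)
  | Negz _ => 0
  end.

Definition sigma : FamE :=
  fun l i l' i' v => if [&& l == l'.+1, i == i' & (i < n)%N] then castP i' v else 0.
Definition tau : FamE :=
  fun l i l' i' v => if [&& l' == l.+1, i == i' & (i < n)%N] then castP i' v else 0.

Definition sigE (j : int) (x : FamE) : Prop :=
  inE j x /\ eqE (compE j sigma x) (scaleE (sgnZ (n%:Z * j)) (compE n%:Z x sigma)).
Definition msigE (j : int) (y : FamE) : Prop :=
  inE j y /\
  eqE (compE j sigma y) (scaleE (sgnZ (n%:Z * (j + 1))) (compE n%:Z y sigma)).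

Definition FamT := (FamE * FamE)%type.
Definition inT (j : int) (t : FamT) : Prop := sigE j t.1 /\ msigE (j - n%:Z + 1) t.2.
Definition eqT (t s : FamT) : Prop := eqE t.1 s.1 /\ eqE t.2 s.2.
Definition addT (t s : FamT) : FamT := (addE t.1 s.1, addE t.2 s.2).
Definition subT (t s : FamT) : FamT :=
  (addE t.1 (scaleE (-1) s.1), addE t.2 (scaleE (-1) s.2)).
Definition zeroT : FamT := (zeroE, zeroE).
Definition oneT : FamT := (idE, zeroE).
Definition mulT (ja : int) (t s : FamT) : FamT :=
  (compE ja t.1 s.1,
   addE (compE (ja - n%:Z + 1) t.1 s.2) (scaleE (sgnZ (ja * (n%:Z + 1))) (compE ja t.2 s.1))).

Variable M : lmodType R.
Variable d : forall i : nat, P i -> P i.-1.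
Variable alpha : P 0 -> M.
Variable beta : M -> P n.-1.

Definition dP : FamP := fun i i' v =>
  if [&& (0 < i)%N, (i < n)%N & i' == i.-1] then castP i' (d v) else 0.

Definition dQ : FamE := fun l i l' i' v =>
  if [&& (0 < i)%N, (i < n)%N, l' == l & i' == i.-1] then
    sgnZ (l * n)%N%:Z *: castP i' (d v)
  else if [&& i == 0, l == l'.+1 & i' == n.-1] then
    sgnZ (l' * n)%N%:Z *: castP i' (beta (alpha (castP 0 v)))
  else 0.

Definition deltaP (j : int) (g : FamP) : FamP :=
  addP (compP j dP g) (scaleP (- sgnZ j) (compP 1 g dP)).
Definition deltaE (j : int) (f : FamE) : FamE :=
  addE (compE j dQ f) (scaleE (- sgnZ j) (compE 1 f dQ)).

Definition xiT (j : int) (t : FamT) : FamT :=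
  (addE (deltaE j t.1) (scaleE (- sgnZ j) (compE n%:Z t.2 sigma)),
   deltaE (j - n%:Z + 1) t.2).

Definition bar (j : int) (g : FamP) : FamE := fun l i l' i' v =>
  if l == l' then sgnZ ((l * n)%N%:Z * j) *: g i i' v else 0.
Definition Delta (j : int) (g : FamP) : FamE :=
  addE (deltaE j (bar j g)) (scaleE (-1) (bar (j + 1) (deltaP j g))).

Definition FF (t : FamT) : FamP := fun i i' v => t.1 0%N i 0%N i' v.
Definition GG (j : int) (g : FamP) : FamT :=
  (bar j g, scaleE (sgnZ j) (compE (- n%:Z) (Delta j g) tau)).

(* exactness of 0 -> M -beta-> P_{n-1} -> ... -> P_0 -alpha-> M -> 0 *)
Definition exact_resolution : Prop :=
  injective beta /\
  (forall m : M, exists x : P 0, alpha x = m) /\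
  (forall i, (0 < i)%N -> (i.+1 < n)%N ->
     forall x : P i, d x = 0 <-> exists y : P i.+1, d y = x) /\
  ((1 < n)%N -> forall x : P n.-1, d x = 0 <-> exists m : M, beta m = x) /\
  ((1 < n)%N -> forall x : P 0, alpha x = 0 <-> exists y : P 1, d y = x) /\
  (n = 1%N -> forall x : P 0, alpha x = 0 <-> exists m : M, castP 0 (beta m) = x).

End Complexes.

Arguments castP {R P} i i' x.
Arguments FamP {R} P.
Arguments FamE {R} P.
Arguments FamT {R} P.
Arguments inP {R} n {P} j g.
Arguments inE {R} n {P} j f.
Arguments inT {R} n {P} j t.
Arguments eqP' {R P} f g.
Arguments addP {R P} f g.
Arguments scaleP {R P} s f.
Arguments zeroP {R} P.
Arguments idFamP {R} n P.
Arguments compP {R P} jg f g.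
Arguments eqE {R P} f g.
Arguments addE {R P} f g.
Arguments scaleE {R P} s f.
Arguments zeroE {R} P.
Arguments idE {R} n P.
Arguments compE {R} n {P} jg f g.
Arguments sigma {R} n P.
Arguments tau {R} n P.
Arguments sigE {R} n {P} j x.
Arguments msigE {R} n {P} j y.
Arguments eqT {R P} t s.
Arguments addT {R P} t s.
Arguments subT {R P} t s.
Arguments zeroT {R} P.
Arguments oneT {R} n P.
Arguments mulT {R} n {P} ja t s.
Arguments dP {R} n {P} d.
Arguments dQ {R n P M} d alpha beta.
Arguments deltaP {R} n {P} d j g.
Arguments deltaE {R n P M} d alpha beta j f.
Arguments xiT {R n P M} d alpha beta j t.
Arguments bar {R} n {P} j g.
Arguments Delta {R n P M} d alpha beta j g.
Arguments FF {R P} t.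
Arguments GG {R n P M} d alpha beta j g.
Arguments exact_resolution {R n P M} d alpha beta.

(* Main.v *)
Require Import Defs.
From HB Require Import structures.
From mathcomp Require Import all_boot all_order all_algebra.
Import GRing.Theory.
Local Open Scope ring_scope.
From mathcomp Require Import zify ring.
From Stdlib Require Import FunctionalExtensionality.
Unset Printing Implicit Defensive.
Import Order.TTheory Num.Theory.

Section Basic.
Variable R : pzRingType.

Lemma odd_absD (a b : int) : odd (absz (a + b)) = odd (absz a) (+) odd (absz b).
Proof.
have h1 := modn2 (absz (a+b)); have h2 := modn2 (absz a); have h3 := modn2 (absz b).
case: (odd (absz a)) h2; case: (odd (absz b)) h3; case: (odd (absz (a+b))) h1 => /= *; lia.
Qed.

Lemma sgnZ_odd (z : int) : sgnZ R z = (-1) ^+ odd (absz z).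
Proof. by rewrite /sgnZ signr_odd. Qed.

Lemma sgnZD a b : sgnZ R (a + b) = sgnZ R a * sgnZ R b.
Proof. by rewrite !sgnZ_odd odd_absD signr_addb. Qed.

Lemma sgnZN a : sgnZ R (- a) = sgnZ R a.
Proof. by rewrite /sgnZ abszN. Qed.

Lemma sgnZB a b : sgnZ R (a - b) = sgnZ R a * sgnZ R b.
Proof. by rewrite sgnZD sgnZN. Qed.

Lemma sgnZ0 : sgnZ R 0 = 1.
Proof. by []. Qed.

Lemma sgnZ1 : sgnZ R 1 = -1.
Proof. by rewrite /sgnZ expr1. Qed.

Lemma sgnZM a b : sgnZ R (a * b) = (-1) ^+ (odd (absz a) && odd (absz b)).
Proof. by rewrite sgnZ_odd abszM oddM. Qed.

Lemma sgnZ_sq a : sgnZ R a * sgnZ R a = 1.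
Proof. by rewrite sgnZ_odd -signr_addb addbb. Qed.

Lemma sgnZ_nn (m : nat) (a : int) : sgnZ R (m%:Z * (m%:Z * a)) = sgnZ R (m%:Z * a).
Proof. by rewrite !sgnZM !abszM /= oddM andbA andbb. Qed.

Lemma sgnZ_comm a (x : R) : sgnZ R a * x = x * sgnZ R a.
Proof. by rewrite sgnZ_odd; case: (odd _); rewrite ?expr1 ?expr0 ?mulN1r ?mulrN1 ?mul1r ?mulr1. Qed.

Section Lin.
Variables (U V : lmodType R) (f : U -> V).
Hypothesis lf : linear f.
Lemma linD u v : f (u + v) = f u + f v.
Proof. by have := lf 1 u v; rewrite !scale1r. Qed.
Lemma lin0 : f 0 = 0.
Proof. have h := linD 0 0; rewrite addr0 in h. by apply: (addrI (f 0)); rewrite addr0 -h. Qed.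
Lemma linZ a u : f (a *: u) = a *: f u.
Proof. by have := lf a u 0; rewrite !addr0 lin0 addr0. Qed.
Lemma linN u : f (- u) = - f u.
Proof. by rewrite -scaleN1r linZ scaleN1r. Qed.
End Lin.

End Basic.
Arguments lin0 {R U V f}. Arguments linD {R U V f}. Arguments linZ {R U V f}. Arguments linN {R U V f}.

Section Fam.
Variable R : pzRingType.
Variable n : nat.
Hypothesis n_gt0 : (0 < n)%N.
Variable P : nat -> lmodType R.
Implicit Types (f g h : FamE P) (j jf jg jh : int).

Lemma castP_id i (x : P i) : castP i i x = x.
Proof. by rewrite /castP; case: eqP => // e; rewrite (eq_irrelevance e (erefl i)). Qed.

Lemma castP_ne i i' (x : P i) : i != i' -> castP i i' x = 0.
Proof. by rewrite /castP; case: eqP. Qed.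

Lemma castP_lin i i' : linear (@castP R P i i').
Proof.
move=> a u v; rewrite /castP; case: eqP => [e|_]; last by rewrite scaler0 addr0.
by case: i' / e.
Qed.

Lemma idx_divn L I : (I < n)%N -> (idx n L I %/ n)%N = L.
Proof. by move=> h; rewrite /idx divnMDl // divn_small // addn0. Qed.

Lemma idx_modn L I : (I < n)%N -> (idx n L I %% n)%N = I.
Proof. by move=> h; rewrite /idx modnMDl modn_small. Qed.

Lemma idxK m : idx n (m %/ n) (m %% n) = m.
Proof. by rewrite /idx -divn_eq. Qed.

Lemma idx_inj L I L' I' : (I < n)%N -> (I' < n)%N -> idx n L I = idx n L' I' -> L = L' /\ I = I'.
Proof.
move=> h h' e; split; first by rewrite -(@idx_divn L I h) e idx_divn.
by rewrite -(@idx_modn L I h) e idx_modn.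
Qed.

Definition linE (f : FamE P) := forall l i l' i', linear (f l i l' i').
Definition zeroC (f : FamE P) := forall l i l' i', f l i l' i' 0 = 0.

Lemma linE_zeroC f : linE f -> zeroC f.
Proof. by move=> h l i l' i'; apply: lin0. Qed.
Arguments linE_zeroC {f}.

Lemma famE_ext (f g : FamE P) : (forall l i l' i' v, f l i l' i' v = g l i l' i' v) -> f = g.
Proof.
move=> h; do 4 (apply: functional_extensionality_dep => ?).
by apply: functional_extensionality => ?; apply: h.
Qed.

Lemma eqE_eq (f g : FamE P) : Defs.eqE f g -> f = g.
Proof. exact: famE_ext. Qed.

Section Comp.
Variables (jg : int) (f g : FamE P) (l i l2 i2 : nat) (x : P i).

Lemma compE_at L0 I0 : (I0 < n)%N -> (idx n L0 I0)%:Z = (idx n l i)%:Z - jg ->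
  compE n jg f g l i l2 i2 x = f L0 I0 l2 i2 (g l i L0 I0 x).
Proof. by move=> hI e; rewrite /compE -e /= idx_divn // idx_modn. Qed.

Lemma compE_neg : (idx n l i)%:Z - jg < 0 -> compE n jg f g l i l2 i2 x = 0.
Proof. by rewrite /compE; case: (_ - jg). Qed.

Lemma compE_split : ((idx n l i)%:Z - jg < 0) \/
  exists L I, (I < n)%N /\ (idx n L I)%:Z = (idx n l i)%:Z - jg.
Proof.
case: (_ - jg) => m; last by left.
by right; exists (m %/ n)%N, (m %% n)%N; rewrite ltn_pmod // idxK.
Qed.
End Comp.

Lemma compE_assoc jg jh (f g h : FamE P) : zeroC f ->
  compE n jh (compE n jg f g) h = compE n (jg + jh) f (compE n jh g h).
Proof.
move=> f0; apply: famE_ext => l i l2 i2 x; rewrite /compE.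
case E: ((idx n l i)%:Z - jh) => [m1|m1].
- rewrite idxK.
  have -> : (idx n l i)%:Z - (jg + jh) = m1%:Z - jg by rewrite -E; ring.
  by case: (m1%:Z - jg).
- by case: (_ - (jg + jh)) => m //=; rewrite f0.
Qed.

Lemma compE_addl jg (f f' g : FamE P) :
  compE n jg (addE f f') g = addE (compE n jg f g) (compE n jg f' g).
Proof. by apply: famE_ext => l i l2 i2 x; rewrite /compE /addE; case: (_ - _) => m //; rewrite addr0. Qed.

Lemma compE_addr jg (f g g' : FamE P) : linE f ->
  compE n jg f (addE g g') = addE (compE n jg f g) (compE n jg f g').
Proof.
move=> hf; apply: famE_ext => l i l2 i2 x; rewrite /compE /addE.
by case: (_ - _) => m //; rewrite ?addr0 // linD.
Qed.

Lemma compE_scalel jg s (f g : FamE P) :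
  compE n jg (scaleE s f) g = scaleE s (compE n jg f g).
Proof. by apply: famE_ext => l i l2 i2 x; rewrite /compE /scaleE; case: (_ - _) => m //; rewrite scaler0. Qed.

Lemma compE_scaler jg s (f g : FamE P) : linE f ->
  compE n jg f (scaleE s g) = scaleE s (compE n jg f g).
Proof.
move=> hf; apply: famE_ext => l i l2 i2 x; rewrite /compE /scaleE.
by case: (_ - _) => m //; rewrite ?scaler0 // linZ.
Qed.

Lemma compE_0l jg (g : FamE P) : compE n jg (zeroE P) g = zeroE P.
Proof. by apply: famE_ext => l i l2 i2 x; rewrite /compE; case: (_ - _). Qed.

Lemma compE_0r jg (f : FamE P) : zeroC f -> compE n jg f (zeroE P) = zeroE P.
Proof. by move=> f0; apply: famE_ext => l i l2 i2 x; rewrite /compE; case: (_ - _) => // m; apply: f0. Qed.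

Definition suppE (j : int) (f : FamE P) := forall l i l' i' (v : P i),
  ~~ [&& (i < n)%N, (i' < n)%N & ((idx n l' i')%:Z + j == (idx n l i)%:Z)] ->
  f l i l' i' v = 0.

Lemma inE_lin j f : Defs.inE n j f -> linE f. Proof. by case. Qed.
Lemma inE_supp j f : Defs.inE n j f -> suppE j f. Proof. by case. Qed.
Arguments inE_lin {j f}. Arguments inE_supp {j f}.
Lemma inE_zeroC j f : Defs.inE n j f -> zeroC f.
Proof. by move/inE_lin/linE_zeroC. Qed.
Arguments inE_zeroC {j f}.

Lemma linE_comp jg f g : linE f -> linE g -> linE (compE n jg f g).
Proof.
move=> hf hg l i l2 i2 a u v; rewrite /compE; case: (_ - _) => m.
  by rewrite (hg _ _ _ _) (hf _ _ _ _).
by rewrite scaler0 addr0.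
Qed.

Lemma linE_add f g : linE f -> linE g -> linE (addE f g).
Proof.
move=> hf hg l i l2 i2 a u v; rewrite /addE (hf _ _ _ _) (hg _ _ _ _).
by rewrite scalerDr addrACA.
Qed.

Lemma linE_scale s f : (forall a, s * a = a * s) -> linE f -> linE (scaleE s f).
Proof.
move=> hs hf l i l2 i2 a u v; rewrite /scaleE (hf _ _ _ _) scalerDr !scalerA hs //.
Qed.

Lemma linE_zero : linE (zeroE P).
Proof. by move=> l i l2 i2 a u v; rewrite /zeroE scaler0 addr0. Qed.

Lemma suppE_comp jf jg f g : zeroC f -> suppE jf f -> suppE jg g -> suppE (jf + jg) (compE n jg f g).
Proof.
move=> f0 sf sg l i l2 i2 v hn.
case: (compE_split jg l i) => [hneg|[L [I [hI e]]]]; first by rewrite compE_neg.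
rewrite (compE_at _ _ _ _ _ _ _ _ _ _ hI e).
case hi: (i < n)%N; last by rewrite sg ?hi // f0.
apply: sf; apply: contra hn => /and3P [_ h2 /eqP e2]; rewrite hi h2 /=.
by apply/eqP; rewrite addrA e2 e; ring.
Qed.

Lemma inE_comp jf jg f g : Defs.inE n jf f -> Defs.inE n jg g -> Defs.inE n (jf + jg) (compE n jg f g).
Proof.
move=> hf hg; split.
  by apply: linE_comp; [exact: inE_lin hf | exact: inE_lin hg].
apply: suppE_comp; [exact: inE_zeroC hf | exact: inE_supp hf | exact: inE_supp hg].
Qed.

Arguments inE_comp {jf jg f g}.
Lemma inE_add j f g : Defs.inE n j f -> Defs.inE n j g -> Defs.inE n j (addE f g).
Proof.
move=> hf hg; split.
  by apply: linE_add; [exact: inE_lin hf | exact: inE_lin hg].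
by move=> l i l2 i2 v h; rewrite /addE (inE_supp hf) // (inE_supp hg) // addr0.
Qed.

Lemma inE_scale j s f : (forall a, s * a = a * s) -> Defs.inE n j f -> Defs.inE n j (scaleE s f).
Proof.
move=> hs hf; split.
  by apply: linE_scale => //; exact: inE_lin hf.
by move=> l i l2 i2 v h; rewrite /scaleE (inE_supp hf) // scaler0.
Qed.

Lemma inE_zero j : Defs.inE n j (zeroE P).
Proof. by split; [exact: linE_zero | by []]. Qed.

Lemma inE_deg j j' f : j = j' -> Defs.inE n j f -> Defs.inE n j' f.
Proof. by move->. Qed.

Definition delt D j f : FamE P :=
  addE (compE n j D f) (scaleE (- sgnZ R j) (compE n 1 f D)).

Lemma delt_leibniz D jf jg f g : linE D -> linE f ->
  delt D (jf + jg) (compE n jg f g) =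
  addE (compE n jg (delt D jf f) g) (scaleE (sgnZ R jf) (compE n (jg + 1) f (delt D jg g))).
Proof.
move=> lD lf; rewrite /delt.
rewrite compE_addl compE_scalel (compE_assoc _ _ _ _ _ (linE_zeroC lf)).
rewrite compE_addr // compE_scaler // (compE_assoc _ _ _ _ _ (linE_zeroC lf)).
rewrite -(compE_assoc _ _ _ _ _ (linE_zeroC lD)) (addrC 1 jg).
apply: famE_ext => l i l2 i2 v; rewrite /addE /scaleE.
set a := compE n jg _ g l i l2 i2 v.
set b := compE n (jg + 1) f _ l i l2 i2 v.
set c := compE n _ f _ l i l2 i2 v.
rewrite sgnZD !scalerDr !scalerA !mulrN -!addrA; congr (_ + _).
by rewrite !scaleNr addrA addNr add0r.
Qed.

Lemma delt_add D j f g : linE D -> delt D j (addE f g) = addE (delt D j f) (delt D j g).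
Proof.
move=> lD; rewrite /delt compE_addr // compE_addl.
apply: famE_ext => l i l2 i2 v; rewrite /addE /scaleE scalerDr.
by rewrite -!addrA; congr (_ + _); rewrite addrCA.
Qed.

Lemma delt_scale D j s f : linE D -> (forall a, s * a = a * s) ->
  delt D j (scaleE s f) = scaleE s (delt D j f).
Proof.
move=> lD hs; rewrite /delt compE_scaler // compE_scalel.
apply: famE_ext => l i l2 i2 v; rewrite /addE /scaleE scalerDr !scalerA.
by rewrite hs.
Qed.

Lemma delt_Dadd D D' j f : linE f ->
  delt (addE D D') j f = addE (delt D j f) (delt D' j f).
Proof.
move=> lf; rewrite /delt compE_addl compE_addr //.
apply: famE_ext => l i l2 i2 v; rewrite /addE /scaleE scalerDr.
by rewrite -!addrA; congr (_ + _); rewrite addrCA.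
Qed.

Lemma delt_Dscale D s j f : linE f -> (forall a, s * a = a * s) ->
  delt (scaleE s D) j f = scaleE s (delt D j f).
Proof.
move=> lf hs; rewrite /delt compE_scalel compE_scaler //.
apply: famE_ext => l i l2 i2 v; rewrite /addE /scaleE scalerDr !scalerA.
by rewrite hs.
Qed.

Lemma delt_delt D j f : linE D -> linE f -> compE n 1 D D = zeroE P ->
  delt D (j + 1) (delt D j f) = zeroE P.
Proof.
move=> lD lf DD; rewrite {1}/delt {2}/delt.
rewrite compE_addr // compE_scaler // compE_addl compE_scalel.
rewrite {1}(addrC j 1) -(compE_assoc 1 j D D f (linE_zeroC lD)) DD compE_0l.
rewrite (compE_assoc j 1 D f D (linE_zeroC lD)) (compE_assoc 1 1 f D D (linE_zeroC lf)).
rewrite DD (compE_0r _ _ (linE_zeroC lf)).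
apply: famE_ext => l i l2 i2 v; rewrite /addE /scaleE /zeroE scaler0 !addr0 add0r.
by rewrite sgnZD sgnZ1 mulrN1 opprK -scalerDl addNr scale0r.
Qed.

Lemma compE_f0 jg f g l i l2 i2 (v : P i) :
  (forall L I (w : P I), f L I l2 i2 w = 0) -> compE n jg f g l i l2 i2 v = 0.
Proof. by move=> h; rewrite /compE; case: (_ - _) => m. Qed.

Lemma compE_ige jg f g l i l2 i2 (v : P i) : (n <= i)%N -> suppE jg g -> zeroC f ->
  compE n jg f g l i l2 i2 v = 0.
Proof.
move=> hi sg f0; rewrite /compE; case: (_ - _) => m //.
by rewrite sg ?f0 // ltnNge hi.
Qed.

Lemma compE_srcl jg f g l i l2 i2 (v : P i) L I : suppE jg g -> zeroC f -> (I < n)%N ->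
  (forall L' I' (w : P I'), (L' != L) || (I' != I) -> f L' I' l2 i2 w = 0) ->
  compE n jg f g l i l2 i2 v = f L I l2 i2 (g l i L I v).
Proof.
move=> sg f0 hI hf.
have gz : (idx n L I)%:Z + jg != (idx n l i)%:Z -> g l i L I v = 0.
  by move=> h; apply: sg; rewrite hI /= andbC (negbTE h).
case: (compE_split jg l i) => [hneg|[L' [I' [hI' e]]]].
  rewrite compE_neg // gz ?f0 //; apply: contraTneq hneg => <-.
  by rewrite addrK.
rewrite (compE_at _ _ _ _ _ _ _ _ _ _ hI' e).
case: (boolP ((L' != L) || (I' != I))) => [hne|].
  rewrite hf // gz ?f0 //; apply/negP => /eqP e2; move: hne.
  have : (idx n L I)%:Z = (idx n L' I')%:Z by rewrite e -e2 addrK.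
  case=> e3; by have [-> ->] := idx_inj _ _ _ _ hI hI' e3; rewrite !eqxx.
by rewrite negb_or !negbK => /andP [/eqP -> /eqP ->].
Qed.

Lemma lin_zero (U V : lmodType R) : linear (fun _ : U => (0 : V)).
Proof. by move=> a u v; rewrite scaler0 addr0. Qed.

Lemma lin_if (U V : lmodType R) (b : bool) (h : U -> V) : linear h ->
  linear (fun u => if b then h u else 0).
Proof. by case: b => // _; exact: lin_zero. Qed.

Lemma sigma_in : Defs.inE n n%:Z (sigma n P).
Proof.
split.
  by move=> l i l' i'; rewrite /sigma; apply: lin_if; exact: castP_lin.
move=> l i l' i' v; rewrite /sigma; case: ifP => // /and3P [/eqP -> /eqP <- hi].
rewrite hi /= => /negP []; apply/eqP; rewrite /idx mulSn; lia.
Qed.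

Lemma tau_in : Defs.inE n (- n%:Z) (tau n P).
Proof.
split.
  by move=> l i l' i'; rewrite /tau; apply: lin_if; exact: castP_lin.
move=> l i l' i' v; rewrite /tau; case: ifP => // /and3P [/eqP -> /eqP <- hi].
rewrite hi /= => /negP []; apply/eqP; rewrite /idx mulSn; lia.
Qed.

Lemma idE_in : Defs.inE n 0 (idE n P).
Proof.
split.
  by move=> l i l' i'; rewrite /idE; apply: lin_if; exact: castP_lin.
move=> l i l' i' v; rewrite /idE; case: ifP => // /and3P [/eqP -> /eqP <- hi].
by rewrite hi addr0 eqxx.
Qed.

Lemma compE_sigl jg g l i L i2 (v : P i) : suppE jg g ->
  compE n jg (sigma n P) g l i L i2 v = g l i L.+1 i2 v.
Proof.
move=> sg; case hi2: (i2 < n)%N.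
  rewrite (compE_srcl _ _ _ _ _ _ _ _ L.+1 i2 sg (inE_zeroC sigma_in) hi2).
    by rewrite /sigma !eqxx hi2 castP_id.
  move=> L' I' w hne; rewrite /sigma; case: ifP => // /and3P [/eqP e1 e2 _].
  by move: hne; rewrite e1 e2 !eqxx.
rewrite compE_f0; last by move=> L' I' w; rewrite /sigma; case: ifP => // /and3P [_ /eqP e hI]; by rewrite e hi2 in hI.
by rewrite sg // hi2 andbF.
Qed.

Lemma compE_taul jg g l i L i2 (v : P i) : suppE jg g ->
  compE n jg (tau n P) g l i L i2 v = match L with 0 => 0 | L'.+1 => g l i L' i2 v end.
Proof.
move=> sg; case: L => [|L].
  by rewrite compE_f0 // => L' I' w; rewrite /tau.
case hi2: (i2 < n)%N.
  rewrite (compE_srcl _ _ _ _ _ _ _ _ L i2 sg (inE_zeroC tau_in) hi2).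
    by rewrite /tau !eqxx hi2 castP_id.
  move=> L' I' w hne; rewrite /tau; case: ifP => // /and3P [/eqP [e1] e2 _].
  by move: hne; rewrite e1 e2 !eqxx.
rewrite compE_f0; last by move=> L' I' w; rewrite /tau; case: ifP => // /and3P [_ /eqP e hI]; by rewrite e hi2 in hI.
by rewrite sg // hi2 andbF.
Qed.

Lemma compE_sigr jf f l i l2 i2 (v : P i) : Defs.inE n jf f ->
  compE n n%:Z f (sigma n P) l i l2 i2 v = match l with 0 => 0 | l'.+1 => f l' i l2 i2 v end.
Proof.
move=> hf; case hi: (i < n)%N; last first.
  have hge : (n <= i)%N by rewrite leqNgt hi.
  rewrite compE_ige //; [ | exact: inE_supp sigma_in | exact: inE_zeroC hf].
  by case: l => // l; rewrite (inE_supp hf) // hi.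
case: l => [|l].
  by rewrite compE_neg // /idx mul0n add0n subr_lt0 ltz_nat.
rewrite (compE_at _ _ _ _ _ _ _ _ l i hi); last by rewrite /idx mulSn; lia.
by rewrite /sigma !eqxx hi castP_id.
Qed.

Lemma compE_taur jf f l i l2 i2 (v : P i) : Defs.inE n jf f ->
  compE n (- n%:Z) f (tau n P) l i l2 i2 v = f l.+1 i l2 i2 v.
Proof.
move=> hf; case hi: (i < n)%N; last first.
  have hge : (n <= i)%N by rewrite leqNgt hi.
  rewrite compE_ige //; [ | exact: inE_supp tau_in | exact: inE_zeroC hf].
  by rewrite (inE_supp hf) // hi.
rewrite (compE_at _ _ _ _ _ _ _ _ l.+1 i hi); last by rewrite /idx mulSn; lia.
by rewrite /tau !eqxx hi castP_id.
Qed.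

Lemma compE_idl jg g : suppE jg g -> compE n jg (idE n P) g = g.
Proof.
move=> sg; apply: famE_ext => l i l2 i2 v.
case hi2: (i2 < n)%N.
  rewrite (compE_srcl _ _ _ _ _ _ _ _ l2 i2 sg (inE_zeroC idE_in) hi2).
    by rewrite /idE !eqxx hi2 castP_id.
  move=> L' I' w hne; rewrite /idE; case: ifP => // /and3P [/eqP e1 e2 _].
  by move: hne; rewrite e1 e2 !eqxx.
rewrite compE_f0; last by move=> L' I' w; rewrite /idE; case: ifP => // /and3P [_ /eqP e hI]; by rewrite e hi2 in hI.
by rewrite sg // hi2 andbF.
Qed.

Lemma compE_idr jf f : Defs.inE n jf f -> compE n 0 f (idE n P) = f.
Proof.
move=> hf; apply: famE_ext => l i l2 i2 v.
case hi: (i < n)%N; last first.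
  have hge : (n <= i)%N by rewrite leqNgt hi.
  rewrite compE_ige //; [ | exact: inE_supp idE_in | exact: inE_zeroC hf].
  by rewrite (inE_supp hf) // hi.
rewrite (compE_at _ _ _ _ _ _ _ _ l i hi); last by rewrite subr0.
by rewrite /idE !eqxx hi castP_id.
Qed.

Definition shiftc (s : R) f := forall l i L i2 (v : P i),
  f l i L.+1 i2 v = match l with 0 => 0 | l'.+1 => s *: f l' i L i2 v end.

Lemma sig_shift j s f : Defs.inE n j f ->
  Defs.eqE (compE n j (sigma n P) f) (scaleE s (compE n n%:Z f (sigma n P))) <-> shiftc s f.
Proof.
move=> hf; split.
  move=> h l i L i2 v; have := h l i L i2 v.
  rewrite (compE_sigl _ _ _ _ _ _ _ (inE_supp hf)) /scaleE (compE_sigr _ _ _ _ _ _ _ hf).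
  by case: l => [|l] //; rewrite scaler0.
move=> h l i L i2 v; rewrite (compE_sigl _ _ _ _ _ _ _ (inE_supp hf)) /scaleE (compE_sigr _ _ _ _ _ _ _ hf) h.
by case: l => [|l] //; rewrite scaler0.
Qed.

Lemma sig_comp jf jg s t f g : Defs.inE n jf f -> Defs.inE n jg g ->
  Defs.eqE (compE n jf (sigma n P) f) (scaleE s (compE n n%:Z f (sigma n P))) ->
  Defs.eqE (compE n jg (sigma n P) g) (scaleE t (compE n n%:Z g (sigma n P))) ->
  Defs.eqE (compE n (jf + jg) (sigma n P) (compE n jg f g))
           (scaleE (s * t) (compE n n%:Z (compE n jg f g) (sigma n P))).
Proof.
move=> hf hg /eqE_eq ef /eqE_eq eg.
rewrite -(compE_assoc _ _ _ _ _ (inE_zeroC sigma_in)) ef compE_scalel.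
rewrite (compE_assoc _ _ _ _ _ (inE_zeroC hf)) eg (compE_scaler _ _ _ _ (inE_lin hf)).
rewrite (compE_assoc _ _ _ _ _ (inE_zeroC hf)) (addrC jg).
by move=> l i l2 i2 v; rewrite /scaleE scalerA.
Qed.

Lemma sig_add j s f g :
  Defs.eqE (compE n j (sigma n P) f) (scaleE s (compE n n%:Z f (sigma n P))) ->
  Defs.eqE (compE n j (sigma n P) g) (scaleE s (compE n n%:Z g (sigma n P))) ->
  Defs.eqE (compE n j (sigma n P) (addE f g)) (scaleE s (compE n n%:Z (addE f g) (sigma n P))).
Proof.
move=> /eqE_eq ef /eqE_eq eg.
rewrite (compE_addr _ _ _ _ (inE_lin sigma_in)) compE_addl ef eg.
by move=> l i l2 i2 v; rewrite /scaleE /addE scalerDr.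
Qed.

Lemma sig_scale j s t f : (forall a, t * a = a * t) ->
  Defs.eqE (compE n j (sigma n P) f) (scaleE s (compE n n%:Z f (sigma n P))) ->
  Defs.eqE (compE n j (sigma n P) (scaleE t f)) (scaleE s (compE n n%:Z (scaleE t f) (sigma n P))).
Proof.
move=> ht /eqE_eq ef.
rewrite (compE_scaler _ _ _ _ (inE_lin sigma_in)) compE_scalel ef.
by move=> l i l2 i2 v; rewrite /scaleE !scalerA ht.
Qed.

Lemma sig_zero j s : 
  Defs.eqE (compE n j (sigma n P) (zeroE P)) (scaleE s (compE n n%:Z (zeroE P) (sigma n P))).
Proof.
rewrite (compE_0r _ _ (inE_zeroC sigma_in)) compE_0l.
by move=> l i l2 i2 v; rewrite /scaleE scaler0.
Qed.

Lemma lin_comp (U V W : lmodType R) (h : U -> V) (k : V -> W) :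
  linear h -> linear k -> linear (fun u => k (h u)).
Proof. by move=> lh lk a u v; rewrite lh lk. Qed.

Lemma lin_sgn (U V : lmodType R) (h : U -> V) z : linear h -> linear (fun u => sgnZ R z *: h u).
Proof. by move=> lh a u v; rewrite lh scalerDr !scalerA sgnZ_comm. Qed.

Variable M : lmodType R.
Variable d : forall i : nat, P i -> P i.-1.
Variable alpha : P 0%N -> M.
Variable beta : M -> P n.-1.
Hypothesis dlin : forall i, (0 < i < n)%N -> linear (d i).
Hypothesis alin : linear alpha.
Hypothesis blin : linear beta.
Hypothesis ex : exact_resolution d alpha beta.

Notation dQ := (dQ d alpha beta).

Lemma dQ_in : Defs.inE n 1 dQ.
Proof.
split.
  move=> l i l' i'; rewrite /Defs.dQ.
  case E: [&& (0 < i)%N, (i < n)%N, l' == l & i' == i.-1].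
    move/and4P: E => [h1 h2 _ _]; apply: lin_sgn; apply: lin_comp; [by apply: dlin; rewrite h1 h2 | exact: castP_lin].
  case: [&& i == 0%N, l == l'.+1 & i' == n.-1]; last exact: lin_zero.
  apply: lin_sgn; apply: lin_comp; last exact: castP_lin.
  apply: lin_comp; last exact: blin.
  apply: lin_comp; last exact: alin.
  exact: castP_lin.
move=> l i l' i' v; rewrite /Defs.dQ.
case: ifP => [/and4P [h1 h2 /eqP -> /eqP ->] |_].
  move=> hn; exfalso; move/negP: hn; apply.
  rewrite h2 (leq_ltn_trans (leq_pred i) h2) /=.
  by apply/eqP; rewrite /idx; lia.
case: ifP => // /and3P [/eqP hi /eqP -> /eqP ->].
move=> hn; exfalso; move/negP: hn; apply.
rewrite hi n_gt0 ltn_predL n_gt0 /=.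
by apply/eqP; rewrite /idx mulSn; lia.
Qed.

Lemma sgnZ_Sn l : sgnZ R (l.+1 * n)%N%:Z = sgnZ R n%:Z * sgnZ R (l * n)%N%:Z.
Proof. by rewrite mulSn PoszD sgnZD. Qed.

Lemma dQ_shift : shiftc (sgnZ R n%:Z) dQ.
Proof.
move=> l i L i2 v; rewrite /Defs.dQ; case: l => [|l]; first by rewrite !andbF.
rewrite !eqSS sgnZ_Sn.
case: ifP => _; first by rewrite scalerA.
by case: ifP => _; rewrite ?scaler0 // sgnZ_Sn scalerA.
Qed.

Lemma dQ_00 i i2 (v : P i) : dQ 0 i 0 i2 v = dP n d i i2 v.
Proof.
rewrite /Defs.dQ /dP eqxx /= andbF mul0n.
by case: ifP => _; rewrite ?scale1r.
Qed.

Lemma dd0 i (v : P i.+1) : (0 < i)%N -> (i.+1 < n)%N -> d i (d i.+1 v) = 0.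
Proof.
move=> h1 h2; case: ex => _ [_ [mid _]].
by apply/(mid i h1 h2); exists v.
Qed.

Lemma ad0 (v : P 1) : (1 < n)%N -> alpha (d 1 v) = 0.
Proof. by move=> h; case: ex => _ [_ [_ [_ [bot _]]]]; apply/(bot h); exists v. Qed.

Lemma db0 m : (1 < n)%N -> d n.-1 (beta m) = 0.
Proof. by move=> h; case: ex => _ [_ [_ [top _]]]; apply/(top h); exists m. Qed.

Lemma ab0 m : n = 1%N -> alpha (castP n.-1 0 (beta m)) = 0.
Proof. by move=> h; case: ex => _ [_ [_ [_ [_ one]]]]; apply/(one h); exists m. Qed.

Lemma dQ_lin l i l' i' : linear (dQ l i l' i').
Proof. exact: (inE_lin dQ_in). Qed.

Lemma castP0 i i' : castP i i' (0 : P i) = 0.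
Proof. exact: lin0 (castP_lin i i'). Qed.

Lemma dQ_beta l' l2 i2 m : dQ l' n.-1 l2 i2 (beta m) = 0.
Proof.
rewrite /Defs.dQ; case: ifP => [/and4P [h1 _ _ _] | _].
  have h : (1 < n)%N by rewrite -(prednK n_gt0) ltnS.
  by rewrite db0 // castP0 scaler0.
case: ifP => [/and3P [/eqP h0 _ _] | _] //.
have h : n = 1%N by rewrite -(prednK n_gt0) h0.
by rewrite ab0 // (lin0 blin) castP0 scaler0.
Qed.

Lemma dQ_d l l2 i2 i (v : P i.+1) : (i.+1 < n)%N -> dQ l i l2 i2 (d i.+1 v) = 0.
Proof.
case: i v => [|i] v h.
  rewrite /Defs.dQ /= castP_id ad0 // (lin0 blin) castP0 scaler0.
  by case: ifP.
rewrite /Defs.dQ /=; case: ifP => _; first by rewrite dd0 // castP0 scaler0.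
by [].
Qed.

Lemma dQ_conn l (v : P 0) : dQ l.+1 0 l n.-1 v = sgnZ R (l * n)%N%:Z *: beta (alpha v).
Proof. by rewrite /Defs.dQ /= !eqxx /= !castP_id. Qed.

Lemma dQ_step l i (v : P i.+1) : (i.+1 < n)%N -> dQ l i.+1 l i v = sgnZ R (l * n)%N%:Z *: d i.+1 v.
Proof. by move=> h; rewrite /Defs.dQ /= h !eqxx /= castP_id. Qed.

Lemma dQdQ : compE n 1 dQ dQ = zeroE P.
Proof.
apply: famE_ext => l i l2 i2 v; rewrite /zeroE.
case hi: (i < n)%N; last first.
  have hge : (n <= i)%N by rewrite leqNgt hi.
  by rewrite compE_ige //; [exact: inE_supp dQ_in | exact: inE_zeroC dQ_in].
case: i v hi => [|i] v hi.
  case: l => [|l]; first by rewrite compE_neg // /idx.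
  rewrite (compE_at _ _ _ _ _ _ _ _ l n.-1); first last.
  - by rewrite /idx mulSn; have := prednK n_gt0; lia.
  - by rewrite ltn_predL.
  by rewrite dQ_conn (linZ (dQ_lin _ _ _ _)) dQ_beta scaler0.
rewrite (compE_at _ _ _ _ _ _ _ _ l i); first last.
- by rewrite /idx; lia.
- exact: ltnW.
by rewrite dQ_step // (linZ (dQ_lin _ _ _ _)) dQ_d // scaler0.
Qed.

Definition linP (g : FamP P) := forall i i', linear (g i i').
Definition suppP j (g : FamP P) := forall i i' (v : P i),
  ~~ [&& (i < n)%N, (i' < n)%N & (i'%:Z + j == i%:Z)] -> g i i' v = 0.

Lemma inP_lin j (g : FamP P) : inP n j g -> linP g. Proof. by case. Qed.
Lemma inP_supp j (g : FamP P) : inP n j g -> suppP j g. Proof. by case. Qed.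
Arguments inP_lin {j g}. Arguments inP_supp {j g}.

Lemma bar_in j (g : FamP P) : inP n j g -> Defs.inE n j (bar n j g).
Proof.
move=> hg; split.
  move=> l i l' i'; rewrite /bar; case: (l == l'); last exact: lin_zero.
  by apply: lin_sgn; exact: (inP_lin hg).
move=> l i l' i' v hn; rewrite /bar; case: eqP => // e; subst l'.
rewrite (inP_supp hg) ?scaler0 //; apply: contra hn => /and3P [h1 h2 /eqP e].
by rewrite h1 h2 /=; apply/eqP; rewrite /idx !PoszD -e addrA.
Qed.

Arguments bar_in {j g}.
Lemma bar_lin j (g : FamP P) : linP g -> linE (bar n j g).
Proof.
move=> hg l i l' i'; rewrite /bar; case: (l == l'); last exact: lin_zero.
by apply: lin_sgn; exact: hg.
Qed.

Lemma bar_00 j (g : FamP P) i i2 (v : P i) : bar n j g 0 i 0 i2 v = g i i2 v.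
Proof. by rewrite /bar eqxx mul0n mul0r scale1r. Qed.

Lemma bar_0L j (g : FamP P) i L i2 (v : P i) : bar n j g 0 i L.+1 i2 v = 0.
Proof. by []. Qed.

Lemma sgnZ_lnj l j : sgnZ R ((l.+1 * n)%N%:Z * j) = sgnZ R (n%:Z * j) * sgnZ R ((l * n)%N%:Z * j).
Proof. by rewrite mulSn PoszD mulrDl sgnZD. Qed.

Lemma bar_shift j (g : FamP P) : shiftc (sgnZ R (n%:Z * j)) (bar n j g).
Proof.
move=> l i L i2 v; rewrite /bar; case: l => [|l] //.
by rewrite eqSS; case: (l == L); rewrite ?scaler0 // sgnZ_lnj scalerA.
Qed.

Lemma bar_add j (g h : FamP P) : bar n j (addP g h) = addE (bar n j g) (bar n j h).
Proof.
by apply: famE_ext => l i l2 i2 v; rewrite /bar /addE /addP; case: (l == l2); rewrite ?addr0 // scalerDr.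
Qed.

Lemma bar_scale j s (g : FamP P) : (forall a, s * a = a * s) -> bar n j (scaleP s g) = scaleE s (bar n j g).
Proof.
move=> hs; apply: famE_ext => l i l2 i2 v; rewrite /bar /scaleE /scaleP.
by case: (l == l2); rewrite ?scaler0 // !scalerA hs.
Qed.

Lemma bar_zero j : bar n j (zeroP P) = zeroE P.
Proof. by apply: famE_ext => l i l2 i2 v; rewrite /bar /zeroE /zeroP; case: (l == l2); rewrite ?scaler0. Qed.

Lemma bar_id : bar n 0 (idFamP n P) = idE n P.
Proof.
apply: famE_ext => l i l2 i2 v; rewrite /bar /idE /idFamP mulr0 scale1r.
by case: (l == l2).
Qed.

Lemma bar_comp j j' (g h : FamP P) : inP n j g -> inP n j' h ->
  bar n (j + j') (compP j' g h) = compE n j' (bar n j g) (bar n j' h).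
Proof.
move=> hg hh; apply: famE_ext => l i l2 i2 v.
case: (compE_split j' l i) => [hneg | [L [I [hI e]]]].
  rewrite compE_neg // /bar /compP.
  have hlt : i%:Z - j' < 0 by move: hneg; rewrite /idx; lia.
  case E: (i%:Z - j') => [m|m]; first by move: hlt; rewrite E.
  by case: (l == l2); rewrite ?scaler0.
rewrite (compE_at _ _ _ _ _ _ _ _ _ _ hI e) /bar /compP.
case: (eqVneq l L) => [eL|hlL].
  subst L; have eI : i%:Z - j' = I by move: e; rewrite /idx; lia.
  rewrite eI; case: (l == l2); last by [].
  by rewrite (linZ (inP_lin hg _ _)) scalerA mulrDr sgnZD.
rewrite (lin0 (inP_lin hg _ _)) scaler0 if_same.
case: (l == l2); last by [].
case E: (i%:Z - j') => [m|m]; last by rewrite scaler0.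
rewrite (inP_supp hh) ?(lin0 (inP_lin hg _ _)) ?scaler0 //.
apply/negP => /and3P [h1 h2 /eqP e2].
have e3 : idx n l m = idx n L I.
  by apply/eqP; rewrite -eqz_nat e; move: E e2; rewrite /idx; lia.
by have [e4 _] := idx_inj _ _ _ _ h2 hI e3; move: hlL; rewrite e4 eqxx.
Qed.

Arguments bar_comp {j j' g h}.
Lemma famP_ext (g h : FamP P) : (forall i i2 v, g i i2 v = h i i2 v) -> g = h.
Proof.
move=> e; do 2 (apply: functional_extensionality_dep => ?).
by apply: functional_extensionality => ?; apply: e.
Qed.

Lemma bar_tau j (g : FamP P) : inP n j g ->
  compE n j (tau n P) (bar n j g) = scaleE (sgnZ R (n%:Z * j)) (compE n (- n%:Z) (bar n j g) (tau n P)).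
Proof.
move=> hg; apply: famE_ext => l i L i2 v.
rewrite (compE_taul _ _ _ _ _ _ _ (inE_supp (bar_in hg))) /scaleE.
rewrite (compE_taur _ _ _ _ _ _ _ (bar_in hg)).
case: L => [|L]; first by rewrite /bar scaler0.
by rewrite bar_shift scalerA sgnZ_sq scale1r.
Qed.

Lemma dP_lin i i2 : linear (dP n d i i2).
Proof.
rewrite /dP; case E: [&& (0 < i)%N, (i < n)%N & i2 == i.-1]; last exact: lin_zero.
move/and3P: E => [h1 h2 _]; apply: lin_comp; last exact: castP_lin.
by apply: dlin; rewrite h1 h2.
Qed.

Lemma dP_in : inP n 1 (dP n d).
Proof.
split; first exact: dP_lin.
move=> i i' v; rewrite /dP; case: ifP => // /and3P [h1 h2 /eqP ->].
move=> hn; exfalso; move/negP: hn; apply.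
rewrite h2 (leq_ltn_trans (leq_pred i) h2) /=.
by apply/eqP; rewrite -(prednK h1) /=; lia.
Qed.

Lemma dPdP : compP 1 (dP n d) (dP n d) = zeroP P.
Proof.
apply: famP_ext => i i2 v; rewrite /compP /zeroP.
case: i v => [|i] v; first by [].
have -> : (i.+1)%:Z - 1 = i by lia.
rewrite {2}/dP /= eqxx andbT.
case: ifP => hi; last exact: (lin0 (dP_lin _ _)).
rewrite castP_id /dP /=; case: ifP => // /and3P [h1 _ _].
by rewrite dd0 // castP0.
Qed.

Definition Db := bar n 1 (dP n d).

Lemma Db_in : Defs.inE n 1 Db.
Proof. exact: bar_in dP_in. Qed.

Lemma DbDb : compE n 1 Db Db = zeroE P.
Proof. by rewrite /Db -(bar_comp dP_in dP_in) dPdP bar_zero. Qed.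

Definition C := addE dQ (scaleE (-1) Db).

Lemma central_N1 (a : R) : -1 * a = a * -1.
Proof. by rewrite mulN1r mulrN1. Qed.

Lemma C_in : Defs.inE n 1 C.
Proof. by apply: inE_add; [exact: dQ_in | apply: inE_scale; [exact: central_N1 | exact: Db_in]]. Qed.

Lemma C_kill0 i L i2 (v : P i) : C 0 i L i2 v = 0.
Proof.
rewrite /C /addE /scaleE; case: L => [|L].
  by rewrite dQ_00 /Db bar_00 scaleN1r subrr.
by rewrite dQ_shift /Db bar_0L scaler0 addr0.
Qed.

Lemma C_shift : shiftc (sgnZ R n%:Z) C.
Proof.
move=> l i L i2 v; rewrite /C /addE /scaleE dQ_shift /Db bar_shift mulr1.
case: l => [|l]; first by rewrite scaler0 addr0.
by rewrite scalerDr !scalerA central_N1.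
Qed.

Lemma bar_deltaP j (g : FamP P) : inP n j g ->
  bar n (j + 1) (deltaP n d j g) = delt Db j (bar n j g).
Proof.
move=> hg; rewrite /delt /Db -(bar_comp dP_in hg) -(bar_comp hg dP_in) (addrC 1 j).
rewrite /deltaP bar_add bar_scale //.
by move=> a; rewrite mulNr mulrN sgnZ_comm.
Qed.

Lemma Delta_eq j (g : FamP P) : inP n j g ->
  Delta d alpha beta j g = delt C j (bar n j g).
Proof.
move=> hg; have lb : linE (bar n j g) := bar_lin j g (inP_lin hg).
rewrite /Delta bar_deltaP // /C (delt_Dadd _ _ _ _ lb).
by rewrite (delt_Dscale _ _ _ _ lb central_N1).
Qed.

Lemma delt_in D j f : Defs.inE n 1 D -> Defs.inE n j f -> Defs.inE n (j + 1) (delt D j f).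
Proof.
move=> hD hf; apply: inE_add.
  by rewrite addrC; apply: inE_comp.
apply: inE_scale; first by move=> a; rewrite mulNr mulrN sgnZ_comm.
exact: inE_comp.
Qed.

Lemma delt_lin D j f : linE D -> linE f -> linE (delt D j f).
Proof.
move=> hD hf; apply: linE_add; first exact: linE_comp.
apply: linE_scale; first by move=> a; rewrite mulNr mulrN sgnZ_comm.
exact: linE_comp.
Qed.

Lemma comp_kill0r jg f g i l2 i2 (v : P i) : (forall i M I (w : P i), g 0 i M I w = 0) -> zeroC f ->
  compE n jg f g 0 i l2 i2 v = 0.
Proof. by move=> hg f0; rewrite /compE; case: (_ - _) => // m; rewrite hg f0. Qed.

Lemma comp_keep0 jg f g i l2 i2 (v : P i) :
  (forall i M I (w : P i), g 0 i M.+1 I w = 0) -> (forall I (w : P I), f 0 I l2 i2 w = 0) -> zeroC f ->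
  compE n jg f g 0 i l2 i2 v = 0.
Proof.
move=> hg hf f0; rewrite /compE; case: (_ - _) => // m.
by case: (m %/ n)%N => [|M0]; rewrite ?hf // hg f0.
Qed.

Lemma comp_land0 jg f g : (forall I l2 i2 (w : P I), f 0 I l2 i2 w = 0) ->
  (forall l i M I (w : P i), g l i M.+1 I w = 0) -> zeroC f -> compE n jg f g = zeroE P.
Proof.
move=> hf hg f0; apply: famE_ext => l i l2 i2 v; rewrite /compE /zeroE; case: (_ - _) => // m.
by case: (m %/ n)%N => [|M0]; rewrite ?hf // hg f0.
Qed.

Lemma sig_deg j j' s s' f : j = j' -> s = s' ->
  Defs.eqE (compE n j (sigma n P) f) (scaleE s (compE n n%:Z f (sigma n P))) ->
  Defs.eqE (compE n j' (sigma n P) f) (scaleE s' (compE n n%:Z f (sigma n P))).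
Proof. by move=> -> ->. Qed.

Lemma delt_shift D j f : Defs.inE n 1 D -> shiftc (sgnZ R n%:Z) D ->
  Defs.inE n j f -> shiftc (sgnZ R (n%:Z * j)) f ->
  shiftc (sgnZ R (n%:Z * (j + 1))) (delt D j f).
Proof.
move=> hD sD hf sf.
apply: (proj1 (sig_shift (j + 1) (sgnZ R (n%:Z * (j + 1))) _ (delt_in _ _ _ hD hf))).
have eD := proj2 (sig_shift _ (sgnZ R n%:Z) _ hD) sD.
have ef := proj2 (sig_shift _ (sgnZ R (n%:Z * j)) _ hf) sf.
have es : sgnZ R (n%:Z * (j + 1)) = sgnZ R n%:Z * sgnZ R (n%:Z * j).
  by rewrite mulrDr mulr1 sgnZD sgnZ_comm.
have es' : sgnZ R (n%:Z * (j + 1)) = sgnZ R (n%:Z * j) * sgnZ R n%:Z.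
  by rewrite mulrDr mulr1 sgnZD.
apply: sig_add.
  apply: (sig_deg _ _ _ _ (compE n j D f) (addrC 1 j) (esym es)).
  exact: sig_comp.
apply: sig_scale; first by move=> a; rewrite mulNr mulrN sgnZ_comm.
apply: (sig_deg _ _ _ _ (compE n 1 f D) (erefl _) (esym es')).
exact: sig_comp.
Qed.

Lemma tau_shift ju s u : Defs.inE n ju u -> shiftc s u -> (forall i L i2 (v : P i), u 0 i L i2 v = 0) ->
  shiftc s (compE n (- n%:Z) u (tau n P)).
Proof.
move=> hu su k0 l i L i2 v.
rewrite !(compE_taur _ _ _ _ _ _ _ hu) su.
by case: l => [|l]; rewrite ?k0 ?scaler0 // (compE_taur _ _ _ _ _ _ _ hu).
Qed.

Lemma sigtau u ju : Defs.inE n ju u ->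
  compE n (- n%:Z) (compE n n%:Z u (sigma n P)) (tau n P) = u.
Proof.
move=> hu; apply: famE_ext => l i l2 i2 v.
by rewrite (compE_taur _ _ _ _ _ _ _ (inE_comp hu sigma_in)) (compE_sigr _ _ _ _ _ _ _ hu).
Qed.

Lemma tausig u ju : Defs.inE n ju u -> (forall i L i2 (v : P i), u 0 i L i2 v = 0) ->
  compE n n%:Z (compE n (- n%:Z) u (tau n P)) (sigma n P) = u.
Proof.
move=> hu k0; apply: famE_ext => l i l2 i2 v.
rewrite (compE_sigr _ _ _ _ _ _ _ (inE_comp hu tau_in)).
by case: l => [|l]; rewrite ?k0 // (compE_taur _ _ _ _ _ _ _ hu).
Qed.

Lemma dtau_land l i L i2 (v : P i) : delt dQ (- n%:Z) (tau n P) l i L.+1 i2 v = 0.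
Proof.
rewrite /delt /addE /scaleE (compE_taur _ _ _ _ _ _ _ dQ_in).
rewrite (compE_taul _ _ _ _ _ _ _ (inE_supp dQ_in)) dQ_shift sgnZN.
by case: l => [|l]; rewrite ?scaler0 ?addr0 // scaleNr subrr.
Qed.

Lemma delt_zero D j : zeroC D -> delt D j (zeroE P) = zeroE P.
Proof.
move=> D0; rewrite /delt (compE_0r _ _ D0) compE_0l.
by apply: famE_ext => l i l2 i2 v; rewrite /addE /scaleE /zeroE scaler0 addr0.
Qed.

Lemma comp00 jg f g i i2 (v : P i) : zeroC f -> suppE jg g ->
  (forall i M I (w : P i), g 0 i M.+1 I w = 0) ->
  compE n jg f g 0 i 0 i2 v = compP jg (fun I i2 w => f 0 I 0 i2 w) (fun i I w => g 0 i 0 I w) i i2 v.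
Proof.
move=> f0 sg hg; rewrite /compE /compP /idx mul0n add0n.
case: (i%:Z - jg) => // m; case: (ltnP m n) => hm.
  by rewrite divn_small // modn_small.
have hd : (0 < m %/ n)%N by rewrite divn_gt0.
case E: (m %/ n)%N hd => [|M0] // _.
rewrite hg f0 sg ?f0 //.
by apply/negP => /and3P [_ h _]; move: h; rewrite ltnNge hm.
Qed.

Lemma dQ00_fun : (fun I i2 (w : P I) => dQ 0 I 0 i2 w) = dP n d.
Proof. by apply: famP_ext => I i2 w; rewrite dQ_00. Qed.

Lemma inP_of_bar j (g : FamP P) : Defs.inE n j (bar n j g) -> inP n j g.
Proof.
move=> hb; split.
  move=> i i'; have := inE_lin hb 0 i 0 i'.
  have -> : bar n j g 0 i 0 i' = g i i' by apply: functional_extensionality => w; rewrite bar_00.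
  by [].
move=> i i' v hn; rewrite -(bar_00 j); apply: (inE_supp hb).
by rewrite /idx !mul0n !add0n.
Qed.

Lemma deltaP_in j (g : FamP P) : inP n j g -> inP n (j + 1) (deltaP n d j g).
Proof.
move=> hg; apply: inP_of_bar; rewrite bar_deltaP //.
exact: delt_in Db_in (bar_in hg).
Qed.

Arguments deltaP_in {j g}.
Lemma Delta_kill0 j (g : FamP P) i L i2 (v : P i) : inP n j g -> Delta d alpha beta j g 0 i L i2 v = 0.
Proof.
move=> hg; rewrite Delta_eq // /delt /addE /scaleE.
rewrite comp_keep0 //; last exact: inE_zeroC C_in.
  rewrite comp_kill0r ?scaler0 ?addr0 //; last exact: inE_zeroC (bar_in hg).
  by move=> *; apply: C_kill0.
by move=> *; apply: C_kill0.
Qed.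

Lemma Delta_in j (g : FamP P) : inP n j g -> Defs.inE n (j + 1) (Delta d alpha beta j g).
Proof. by move=> hg; rewrite Delta_eq //; apply: delt_in C_in (bar_in hg). Qed.

Lemma Delta_shift j (g : FamP P) : inP n j g -> shiftc (sgnZ R (n%:Z * (j + 1))) (Delta d alpha beta j g).
Proof.
move=> hg; rewrite Delta_eq //; apply: delt_shift C_in C_shift (bar_in hg) _.
exact: bar_shift.
Qed.

Lemma shift_scale s t f : (forall a, t * a = a * t) -> shiftc s f -> shiftc s (scaleE t f).
Proof.
move=> ht sf l i L i2 v; rewrite /scaleE sf.
by case: l => [|l]; rewrite ?scaler0 // !scalerA ht.
Qed.

Lemma sgnZ_msig a : sgnZ R (n%:Z * (a - n%:Z + 1)) = sgnZ R (n%:Z * a).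
Proof.
have -> : n%:Z * (a - n%:Z + 1) = n%:Z * a + n%:Z * (1 - n%:Z) by ring.
rewrite sgnZD.
have -> : sgnZ R (n%:Z * (1 - n%:Z)) = 1.
  by rewrite sgnZM odd_absD abszN absz_nat; case: (odd n).
by rewrite mulr1.
Qed.

Lemma dDelta j (g : FamP P) : inP n j g ->
  delt dQ (j + 1) (Delta d alpha beta j g) = scaleE (-1) (Delta d alpha beta (j + 1) (deltaP n d j g)).
Proof.
move=> hg; have hdg := deltaP_in hg.
have lb := bar_lin j g (inP_lin hg).
have lDb := inE_lin Db_in.
rewrite /Delta bar_deltaP // bar_deltaP // bar_deltaP //.
rewrite (delt_add _ _ _ _ (inE_lin dQ_in)) (delt_scale _ _ _ _ (inE_lin dQ_in) central_N1).
rewrite (delt_delt _ _ _ (inE_lin dQ_in) lb dQdQ).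
rewrite (delt_delt _ _ _ lDb lb DbDb).
apply: famE_ext => l i l2 i2 v; rewrite /addE /scaleE /zeroE.
by rewrite scaler0 addr0 add0r.
Qed.

Arguments Delta_in {j g}. Arguments Delta_eq {j g}. Arguments Delta_shift {j g}. Arguments dDelta {j g}.
Lemma deltaE_delt : deltaE d alpha beta = delt dQ.
Proof. by []. Qed.
Notation xiT := (xiT d alpha beta).
Notation GG := (GG d alpha beta).

Lemma partA j (t : FamT P) : inT n j t ->
     (forall i l' i' (v : P i), (0 < l')%N -> t.1 0%N i l' i' v = 0) /\
     inP n j (FF t) /\
     eqP' (FF (xiT j t)) (deltaP n d j (FF t)).
Proof.
case: t => x y [[hx ex0] [hy ey]] /=.
have sx : shiftc (sgnZ R (n%:Z * j)) x := proj1 (sig_shift _ _ _ hx) ex0.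
have x0 : forall i L i2 (v : P i), x 0 i L.+1 i2 v = 0 by move=> i L i2 v; rewrite sx.
split; first by move=> i [|L] i2 v //; rewrite x0.
split.
  split; first by move=> i i'; exact: (inE_lin hx 0 i 0 i').
  by move=> i i' v h; apply: (inE_supp hx); rewrite /idx !mul0n !add0n.
move=> i i2 v; rewrite /FF /Defs.xiT /= /addE /scaleE.
rewrite (compE_sigr _ _ _ _ _ _ _ hy) scaler0 addr0.
rewrite /deltaE /addE /scaleE /deltaP /addP /scaleP.
rewrite (comp00 _ _ _ _ _ _ (inE_zeroC dQ_in) (inE_supp hx) x0) dQ00_fun.
rewrite (comp00 _ _ _ _ _ _ (inE_zeroC hx) (inE_supp dQ_in)); last first.
  by move=> i' M0 I w; rewrite dQ_shift.
by rewrite dQ00_fun.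
Qed.

Lemma partC j (g : FamP P) : inP n j g ->
     inT n j (GG j g) /\ eqT (GG (j + 1) (deltaP n d j g)) (xiT j (GG j g)).
Proof.
move=> hg.
have hb := bar_in hg.
have sb := bar_shift j g.
have hD := Delta_in hg; have sD := Delta_shift hg.
have kD : forall i L i2 (v : P i), Delta d alpha beta j g 0 i L i2 v = 0.
  by move=> i L i2 v; apply: Delta_kill0.
have hDt : Defs.inE n (j - n%:Z + 1) (compE n (- n%:Z) (Delta d alpha beta j g) (tau n P)).
  by apply: (inE_deg _ _ _ _ (inE_comp hD tau_in)); ring.
have sDt := tau_shift _ _ _ hD sD kD.
have hy : Defs.inE n (j - n%:Z + 1)
   (scaleE (sgnZ R j) (compE n (- n%:Z) (Delta d alpha beta j g) (tau n P))).
  by apply: inE_scale => //; exact: sgnZ_comm.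
split.
  split; first by split; [exact: hb | exact: proj2 (sig_shift _ _ _ hb) sb].
  split; first exact: hy.
  apply: (proj2 (sig_shift _ _ _ hy)).
  have -> : j - n%:Z + 1 + 1 = (j + 1) - n%:Z + 1 by ring.
  rewrite sgnZ_msig; apply: shift_scale => //; exact: sgnZ_comm.
split.
  rewrite /= compE_scalel (tausig _ _ hD kD).
  move=> l i l2 i2 v; rewrite /Delta /addE /scaleE.
  rewrite !scalerA mulNr sgnZ_sq scalerDr !scaleN1r opprK.
  by rewrite addrA subrr add0r.
rewrite /= deltaE_delt.
have -> : j - n%:Z + 1 = (j + 1) + - n%:Z by ring.
rewrite (delt_scale _ _ _ _ (inE_lin dQ_in) (sgnZ_comm _ j)).
rewrite (delt_leibniz _ _ _ _ _ (inE_lin dQ_in) (inE_lin hD)).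
rewrite (comp_land0 _ _ _ kD dtau_land (inE_zeroC hD)).
rewrite (dDelta hg) compE_scalel.
move=> l i l2 i2 v; rewrite /addE /scaleE /zeroE scaler0 addr0 scalerA.
by rewrite sgnZD sgnZ1.
Qed.

Lemma deltaP_add j (g h : FamP P) : deltaP n d j (addP g h) = addP (deltaP n d j g) (deltaP n d j h).
Proof.
apply: famP_ext => i i2 v; rewrite /deltaP /addP /scaleP /compP.
case: (i%:Z - j) => [m|m]; case: (i%:Z - 1) => [m'|m'];
  rewrite ?(linD (dP_lin _ _)) ?scalerDr ?scaler0 ?addr0 ?add0r //.
all: by rewrite -!addrA; congr (_ + _); rewrite addrCA.
Qed.

Lemma Delta_add j (g h : FamP P) :
  Delta d alpha beta j (addP g h) = addE (Delta d alpha beta j g) (Delta d alpha beta j h).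
Proof.
rewrite /Delta deltaP_add (bar_add j g h) (bar_add (j + 1) (deltaP n d j g)).
rewrite deltaE_delt (delt_add _ _ _ _ (inE_lin dQ_in)).
apply: famE_ext => l i l2 i2 v; rewrite /addE /scaleE !scalerDr.
by rewrite addrACA.
Qed.

Lemma partD j (g h : FamP P) : eqT (GG j (addP g h)) (addT (GG j g) (GG j h)).
Proof.
split; first by rewrite /= bar_add.
rewrite /= Delta_add (compE_addl (- n%:Z)).
by move=> l i l2 i2 v; rewrite /addE /scaleE !scalerDr.
Qed.

Lemma partF j (g : FamP P) : inP n j g -> eqP' (deltaP n d j g) (zeroP P) ->
  exists h : FamP P, inP n (j - 1) h /\
    eqP' (addP (FF (GG j g)) (scaleP (-1) g)) (deltaP n d (j - 1) h).
Proof.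
move=> hg _; exists (zeroP P); split.
  by split; [move=> i i'; exact: lin_zero | by []].
move=> i i2 v; rewrite /addP /FF /= bar_00 /scaleP scaleN1r subrr.
rewrite /deltaP /addP /scaleP /compP /zeroP.
case: (i%:Z - (j - 1)) => [m|m]; case: (i%:Z - 1) => [m'|m'];
  by rewrite ?(lin0 (dP_lin _ _)) ?scaler0 ?addr0.
Qed.

Lemma idFamP_in : inP n 0 (idFamP n P).
Proof. by apply: inP_of_bar; rewrite bar_id; exact: idE_in. Qed.

Lemma partG : eqT (GG 0 (idFamP n P)) (oneT n P).
Proof.
split; first by rewrite /= bar_id.
rewrite /= (Delta_eq idFamP_in) bar_id /delt (compE_idr _ _ C_in).
rewrite (compE_idl _ _ (inE_supp C_in)).
have -> : addE C (scaleE (- sgnZ R 0) C) = zeroE P.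
  by apply: famE_ext => l i l2 i2 v; rewrite /addE /scaleE sgnZ0 scaleN1r subrr.
by rewrite compE_0l => l i l2 i2 v; rewrite /scaleE scaler0.
Qed.

Lemma shift_add s f g : shiftc s f -> shiftc s g -> shiftc s (addE f g).
Proof.
move=> sf sg l i L i2 v; rewrite /addE sf sg.
by case: l => [|l]; rewrite ?addr0 // scalerDr.
Qed.

Lemma partE j (t : FamT P) : inT n j t -> eqT (xiT j t) (zeroT P) ->
  exists z : FamT P, inT n (j - 1) z /\ eqT (subT (GG j (FF t)) t) (xiT (j - 1) z).
Proof.
move=> ht; have [A1 [hg A3]] := partA _ _ ht.
case: t ht A1 hg A3 => x y [[hx ex0] [hy ey]] /= A1 hg A3 [e1 e2].
set g := FF (x, y) in hg A3 *.
have sx : shiftc (sgnZ R (n%:Z * j)) x := proj1 (sig_shift _ _ _ hx) ex0.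
have dg0 : deltaP n d j g = zeroP P.
  apply: famP_ext => i i2 v; rewrite -A3 /FF /=.
  by have := e1 0 i 0 i2 v.
have e1' : delt dQ j x = scaleE (sgnZ R j) (compE n n%:Z y (sigma n P)).
  apply: famE_ext => l i l2 i2 v; have := e1 l i l2 i2 v.
  rewrite /= /addE /scaleE /zeroE deltaE_delt => /eqP; rewrite addr_eq0 => /eqP ->.
  by rewrite scaleNr opprK.
have hb := bar_in hg.
set u := addE (bar n j g) (scaleE (-1) x).
have hu : Defs.inE n j u.
  by apply: inE_add => //; apply: inE_scale => //; exact: central_N1.
have su : shiftc (sgnZ R (n%:Z * j)) u.
  apply: shift_add; first exact: bar_shift.
  by apply: shift_scale => //; exact: central_N1.
have ku : forall i L i2 (v : P i), u 0 i L i2 v = 0.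
  move=> i [|L] i2 v; rewrite /u /addE /scaleE.
    by rewrite bar_00 /g /FF /= scaleN1r subrr.
  by rewrite bar_0L (A1 i L.+1 i2 v) // scaler0 addr0.
have hut : Defs.inE n (j - 1 - n%:Z + 1) (compE n (- n%:Z) u (tau n P)).
  by apply: (inE_deg _ _ _ _ (inE_comp hu tau_in)); ring.
have hb2 : Defs.inE n (j - 1 - n%:Z + 1) (scaleE (sgnZ R j) (compE n (- n%:Z) u (tau n P))).
  by apply: inE_scale => //; exact: sgnZ_comm.
exists (zeroE P, scaleE (sgnZ R j) (compE n (- n%:Z) u (tau n P))); split.
  split; first by split; [exact: inE_zero | exact: sig_zero].
  split; first exact: hb2.
  apply: (proj2 (sig_shift _ _ _ hb2)).
  have -> : j - 1 - n%:Z + 1 + 1 = j - n%:Z + 1 by ring.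
  rewrite sgnZ_msig; apply: shift_scale; first exact: sgnZ_comm.
  exact: tau_shift hu su ku.
have hdb : delt dQ j (bar n j g) = Delta d alpha beta j g.
  rewrite /Delta dg0 bar_zero deltaE_delt.
  by apply: famE_ext => l i l2 i2 v; rewrite /addE /scaleE /zeroE scaler0 addr0.
split.
  rewrite /= deltaE_delt (delt_zero _ _ (inE_zeroC dQ_in)) (compE_scalel n%:Z) (tausig _ _ hu ku).
  move=> l i l2 i2 v; rewrite /addE /scaleE /zeroE add0r scalerA sgnZB sgnZ1.
  by rewrite mulrN1 opprK sgnZ_sq scale1r.
rewrite /= deltaE_delt.
have -> : j - 1 - n%:Z + 1 = j + - n%:Z by ring.
rewrite (delt_scale _ _ _ _ (inE_lin dQ_in) (sgnZ_comm _ j)).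
rewrite (delt_leibniz _ _ _ _ _ (inE_lin dQ_in) (inE_lin hu)).
rewrite (comp_land0 _ _ _ ku dtau_land (inE_zeroC hu)).
rewrite /u (delt_add _ _ _ _ (inE_lin dQ_in)) (delt_scale _ _ _ _ (inE_lin dQ_in) central_N1).
rewrite hdb e1' (compE_addl (- n%:Z)) (compE_scalel (- n%:Z)) (compE_scalel (- n%:Z)).
rewrite (sigtau _ _ hy).
move=> l i l2 i2 v; rewrite /addE /scaleE /zeroE scaler0 addr0.
rewrite scalerDr !scalerA; congr (_ + _).
by rewrite mulrN1 mulNr sgnZ_sq.
Qed.

Lemma partH j j' (g h : FamP P) : inP n j g -> inP n j' h ->
  eqT (GG (j + j') (compP j' g h)) (mulT n j' (GG j g) (GG j' h)).
Proof.
move=> hg hh.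
have hbg := bar_in hg; have hbh := bar_in hh.
have hgh : inP n (j + j') (compP j' g h).
  by apply: inP_of_bar; rewrite (bar_comp hg hh); exact: inE_comp hbg hbh.
have hDg := Delta_in hg; have hDh := Delta_in hh.
split; first by rewrite /= (bar_comp hg hh).
rewrite /= (Delta_eq hgh) (bar_comp hg hh).
rewrite (delt_leibniz _ _ _ _ _ (inE_lin C_in) (inE_lin hbg)) -(Delta_eq hg) -(Delta_eq hh).
rewrite (compE_addl (- n%:Z)) (compE_scalel (- n%:Z)).
have bt' : compE n (- n%:Z) (bar n j' h) (tau n P) =
    scaleE (sgnZ R (n%:Z * j')) (compE n j' (tau n P) (bar n j' h)).
  rewrite (bar_tau _ _ hh); apply: famE_ext => l i l2 i2 v.
  by rewrite /scaleE scalerA sgnZ_sq scale1r.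
have eX : compE n (- n%:Z) (compE n j' (Delta d alpha beta j g) (bar n j' h)) (tau n P) =
   scaleE (sgnZ R (n%:Z * j'))
     (compE n j' (compE n (- n%:Z) (Delta d alpha beta j g) (tau n P)) (bar n j' h)).
  rewrite (compE_assoc _ _ _ _ _ (inE_zeroC hDg)) bt'.
  rewrite (compE_scaler _ _ _ _ (inE_lin hDg)) (compE_assoc _ _ _ _ _ (inE_zeroC hDg)).
  by rewrite (addrC j').
have eY : compE n (- n%:Z) (compE n (j' + 1) (bar n j g) (Delta d alpha beta j' h)) (tau n P) =
   compE n (j' - n%:Z + 1) (bar n j g) (compE n (- n%:Z) (Delta d alpha beta j' h) (tau n P)).
  rewrite (compE_assoc _ _ _ _ _ (inE_zeroC hbg)).
  by have -> : j' + 1 + - n%:Z = j' - n%:Z + 1 by ring.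
rewrite eX eY (compE_scaler _ _ _ _ (inE_lin hbg)) (compE_scalel j').
move=> l i l2 i2 v; rewrite /addE /scaleE.
rewrite scalerDr !scalerA addrC; congr (_ + _).
  by rewrite sgnZD sgnZ_comm -mulrA sgnZ_sq mulr1.
rewrite -!sgnZD.
by have -> : j + j' + n%:Z * j' = j' * (n%:Z + 1) + j by ring.
Qed.

End Fam.

Theorem theorem3p6 (k : fieldType) (Gamma : algType k) (n : nat)
  (M : lmodType (Gamma^c)) (P : nat -> lmodType (Gamma^c))
  (d : forall i : nat, P i -> P i.-1) (alpha : P 0%N -> M) (beta : M -> P n.-1) :
  (0 < n)%N ->
  (forall i, (i < n)%N -> fg_projective (P i)) ->
  (forall i, (0 < i < n)%N -> linear (d i)) -> linear alpha -> linear beta ->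
  exact_resolution d alpha beta ->
  (* F is a well-defined morphism of complexes T -> End(P) *)
  (forall (j : int) (t : FamT P), inT n j t ->
     (forall i l' i' (v : P i), (0 < l')%N -> t.1 0%N i l' i' v = 0) /\
     inP n j (FF t) /\
     eqP' (FF (xiT d alpha beta j t)) (deltaP n d j (FF t))) /\
  (forall t s : FamT P, eqP' (FF (addT t s)) (addP (FF t) (FF s))) /\
  (* G is a well-defined morphism of complexes End(P) -> T *)
  (forall (j : int) (g : FamP P), inP n j g ->
     inT n j (GG d alpha beta j g) /\
     eqT (GG d alpha beta (j + 1) (deltaP n d j g)) (xiT d alpha beta j (GG d alpha beta j g))) /\
  (forall (j : int) (g h : FamP P),
     eqT (GG d alpha beta j (addP g h)) (addT (GG d alpha beta j g) (GG d alpha beta j h))) /\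
  (* F and G induce mutually inverse maps on cohomology *)
  (forall (j : int) (t : FamT P), inT n j t -> eqT (xiT d alpha beta j t) (zeroT P) ->
     exists z : FamT P, inT n (j - 1) z /\
       eqT (subT (GG d alpha beta j (FF t)) t) (xiT d alpha beta (j - 1) z)) /\
  (forall (j : int) (g : FamP P), inP n j g -> eqP' (deltaP n d j g) (zeroP P) ->
     exists h : FamP P, inP n (j - 1) h /\
       eqP' (addP (FF (GG d alpha beta j g)) (scaleP (-1) g)) (deltaP n d (j - 1) h)) /\
  (* G is a morphism of DG algebras *)
  eqT (GG d alpha beta 0 (idFamP n P)) (oneT n P) /\
  (forall (j j' : int) (g h : FamP P), inP n j g -> inP n j' h ->
     eqT (GG d alpha beta (j + j') (compP j' g h))
         (mulT n j' (GG d alpha beta j g) (GG d alpha beta j' h))).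
Proof.
move=> n_gt0 _ dlin alin blin ex.
split; first by move=> j t ht; apply: partA.
split; first by [].
split; first by move=> j g hg; apply: partC.
split; first by move=> j g h; apply: partD.
split; first by move=> j t ht hx; apply: partE.
split; first by move=> j g hg hd; apply: partF.
split; first by apply: partG.
by move=> j j' g h hg hh; apply: partH.
Qed.
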